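(* Let $0=t_0<t_1<\dots<t_n=1$ be a grid. Consider the following random procedure. 1. Draw $X_{t_n}\sim p_{t_n}$ and $\boldsymbol\tau_{t_n}\sim j_{t_n}(\cdot\mid X_{t_n})$. 2. For $i=n-1,\dots,0$: - draw $X_0'\sim p_{0|t_{i+1}}(\cdot\mid X_{t_{i+1}},\boldsymbol\tau_{t_{i+1}})$ (equivalently, from the masked-diffusion denoiser evaluated at $\tilde{\mathbf x}_{t_{i+1}}(\boldsymbol\tau_{t_{i+1}})$); - draw $X_{t_i}\sim q_{t_i|0,t_{i+1}}(\cdot\mid X_0',X_{t_{i+1}})$ (the UDM bridge; for $t_i=0$ this means $X_{t_0}=X_0'$); - draw $\boldsymbol\tau_{t_i}\sim j_{t_i|0}(\cdot\mid X_0',X_{t_i})$. Then the law of $(X_{t_0},\dots,X_{t_n})$ is the UDM reverse-chain law $$p_{t_n}(\mathbf x_{t_n})\prod_{i=1}^np_{t_{i-1}|t_i}(\mathbf x_{t_{i-1}}\mid\mathbf x_{t_i}).$$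
   Context: **UDM setup.** - Let $K\ge2$, $L\ge1$ and $\mathsf V=\{1,\dots,K\}$. Tokens are identified with the standard basis vectors of $\mathbb R^K$, and $\mathbf 1$ is the all-ones vector. - $\mathsf X=\mathsf V^L$. $p_0$ is a distribution on $\mathsf X$. - The schedule $\alpha:[0,1]\to[0,1]$ is continuously differentiable and strictly decreasing, with $\alpha_0=1$ and $\alpha_1=0$. Set $\alpha_{t|s}=\alpha_t/\alpha_s$. - UDM forward kernel: $q_{t|s}(\mathbf x_t\mid\mathbf x_s)=\prod_\ell\langle\mathbf x_t^\ell,\alpha_{t|s}\mathbf x_s^\ell+(1-\alpha_{t|s})\mathbf 1/K\rangle$. - $p_t(\mathbf x)=\sum_{\mathbf x_0}p_0(\mathbf x_0)q_{t|0}(\mathbf x\mid\mathbf x_0)$. - UDM reverse kernel: $p_{s|t}(\mathbf x_s\mid\mathbf x_t)=p_s(\mathbf x_s)q_{t|s}(\mathbf x_t\mid\mathbf x_s)/p_t(\mathbf x_t)$. - UDM bridge: $q_{s|0,t}(\mathbf x_s\mid\mathbf x_0,\mathbf x_t)=q_{t|s}(\mathbf x_t\mid\mathbf x_s)q_{s|0}(\mathbf x_s\mid\mathbf x_0)/q_{t|0}(\mathbf x_t\mid\mathbf x_0)$ for $s>0$, and $q_{0|0,t}(\mathbf x\mid\mathbf x_0,\mathbf x_t)=\mathbf 1\{\mathbf x=\mathbf x_0\}$. **Transition times.** - $\boldsymbol\tau\in[0,1]^L$ has density $j(\boldsymbol\tau)=\prod_\ell(-\alpha'_{\boldsymbol\tau^\ell})$,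 i.e. its coordinates are i.i.d. with $\mathbb P(\boldsymbol\tau^\ell<t)=1-\alpha_t$. - $q_{t|0}(\mathbf x_t\mid\mathbf x_0,\boldsymbol\tau)=\prod_\ell\mathrm{Cat}\big(\mathbf x_t^\ell;\mathbf 1\{\boldsymbol\tau^\ell>t\}\mathbf x_0^\ell+\mathbf 1\{\boldsymbol\tau^\ell\le t\}\mathbf 1/K\big)$. - Joint forward law: $X_0\sim p_0$ and $\boldsymbol\tau\sim j$ independent, and $X_t\mid(X_0,\boldsymbol\tau)\sim q_{t|0}(\cdot\mid X_0,\boldsymbol\tau)$. The marginal of $X_t$ is $p_t$. - $j_t(\cdot\mid\mathbf x_t)$ is the conditional density of $\boldsymbol\tau$ given $X_t=\mathbf x_t$. - $p_{0|t}(\mathbf x_0\mid\mathbf x_t,\boldsymbol\tau)\propto p_0(\mathbf x_0)q_{t|0}(\mathbf x_t\mid\mathbf x_0,\boldsymbol\tau)$ is the conditional law of $X_0$ given $(X_t,\boldsymbol\tau)$. - Masked sequence: $\tilde{\mathbf x}_t(\boldsymbol\tau)^\ell=\mathbf x_t^\ell$ if $\boldsymbol\tau^\ell>t$, and equals a mask symbol otherwise. **Resampling density.** - $j_{s|0}(\boldsymbol\tau_s\mid\mathbf x_0,\mathbf x_s):=j(\boldsymbol\tau_s)q_{s|0}(\mathbf x_s\mid\mathbf x_0,\boldsymbol\tau_s)/q_{s|0}(\mathbf x_s\mid\mathbf x_0)$. - Explicitly it is the product over $\ell$ of: - $\frac{-\alpha'_{\boldsymbol\tau_s^\ell}}{1-\alpha_s}\mathbf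 1\{\boldsymbol\tau_s^\ell\le s\}$ if $\mathbf x_s^\ell\ne\mathbf x_0^\ell$; - $\frac{-\alpha'_{\boldsymbol\tau_s^\ell}}{1+(K-1)\alpha_s}\big(\mathbf 1\{\boldsymbol\tau_s^\ell\le s\}+K\mathbf 1\{\boldsymbol\tau_s^\ell>s\}\big)$ if $\mathbf x_s^\ell=\mathbf x_0^\ell$. *)

(* Defs.v *)
From HB Require Import structures.
From mathcomp Require Import all_boot all_order all_algebra.
From mathcomp Require Import all_classical all_reals all_analysis.
Set Implicit Arguments. Unset Strict Implicit. Unset Printing Implicit Defensive.
Import Order.TTheory GRing.Theory Num.Theory.
Import numFieldNormedType.Exports.
Local Open Scope classical_set_scope.
Local Open Scope ring_scope.

Section UDM.
Variable R : realType.
Variables K L : nat.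
Variable alpha : R -> R.
Variable p0 : {ffun 'I_L -> 'I_K} -> R.

Local Notation X := {ffun 'I_L -> 'I_K}.

Definition alpha_ts (t s : R) : R := alpha t / alpha s.

(* UDM forward kernel q_{t|s}(xt | xs) ; <e_a, a e_b + (1-a) 1/K> written out *)
Definition q_fwd (t s : R) (xt xs : X) : R :=
  \prod_(l < L) (alpha_ts t s * (xt l == xs l)%:R + (1 - alpha_ts t s) / K%:R).

Definition p_marg (t : R) (x : X) : R := \sum_(x0 : X) p0 x0 * q_fwd t 0 x x0.

Definition p_rev (s t : R) (xs xt : X) : R :=
  p_marg s xs * q_fwd t s xt xs / p_marg t xt.

Definition q_bridge (s t : R) (xs x0 xt : X) : R :=
  if s == 0 then (xs == x0)%:R
  else q_fwd t s xt xs * q_fwd s 0 xs x0 / q_fwd t 0 xt x0.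

(* density j of the transition times on [0,1]^L *)
Definition j_dens (tau : 'I_L -> R) : R := \prod_(l < L) (- derive1 alpha (tau l)).

(* q_{t|0}(xt | x0, tau) ; Cat(x; v) = <x, v> *)
Definition q_tau (t : R) (xt x0 : X) (tau : 'I_L -> R) : R :=
  \prod_(l < L) (if t < tau l then (xt l == x0 l)%:R else K%:R^-1).

Definition j_cond (t : R) (xt : X) (tau : 'I_L -> R) : R :=
  j_dens tau * (\sum_(x0 : X) p0 x0 * q_tau t xt x0 tau) / p_marg t xt.

Definition p0_cond (t : R) (xt : X) (tau : 'I_L -> R) (x0 : X) : R :=
  p0 x0 * q_tau t xt x0 tau / (\sum_(y : X) p0 y * q_tau t xt y tau).

Definition j_resample (s : R) (x0 xs : X) (tau : 'I_L -> R) : R :=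
  j_dens tau * q_tau s xs x0 tau / q_fwd s 0 xs x0.

Fixpoint iterint (m : nat) (f : seq R -> \bar R) : \bar R :=
  match m with
  | 0 => f [::]
  | m'.+1 => (\int[@lebesgue_measure R]_(u in `[0%R, 1%R]) iterint m' (fun s => f (u :: s)))%E
  end.

Definition int_tau (g : ('I_L -> R) -> \bar R) : \bar R :=
  iterint L (fun s => g (fun l => nth 0 s l)).

(* Contribution of the steps producing X_{t_{k-1}},...,X_{t_0} (and the
   tau's drawn along the way), given X_{t_k} = x k and tau_{t_k} = tau. *)
Fixpoint proc_rest (t : nat -> R) (x : nat -> X) (k : nat) (tau : 'I_L -> R)
  : \bar R :=
  match k with
  | 0 => 1%E
  | k'.+1 =>
    (\sum_(y : X)
       ((p0_cond (t k'.+1) (x k'.+1) tau y * q_bridge (t k') (t k'.+1) (x k') y (x k'.+1))%:E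
        * int_tau (fun tau' => (j_resample (t k') y (x k') tau')%:E
                               * proc_rest t x k' tau')))%E
  end.

Definition proc_law (t : nat -> R) (x : nat -> X) (n : nat) : \bar R :=
  int_tau (fun tau => ((p_marg (t n) (x n) * j_cond (t n) (x n) tau)%:E
                        * proc_rest t x n tau)%E).

Definition rev_law (t : nat -> R) (x : nat -> X) (n : nat) : R :=
  p_marg (t n) (x n) * \prod_(1 <= i < n.+1) p_rev (t i.-1) (t i) (x i.-1) (x i).

End UDM.

(* Main.v *)
Require Import Defs.
From HB Require Import structures.
From mathcomp Require Import all_boot all_order all_algebra.
From mathcomp Require Import all_classical all_reals all_analysis.
From mathcomp Require Import ring lra.
From mathcomp Require Import measurable_realfun.
Import Order.TTheory GRing.Theory Num.Theory.
Import numFieldNormedType.Exports.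
Local Open Scope classical_set_scope.
Local Open Scope ring_scope.
Set Implicit Arguments. Unset Strict Implicit. Unset Printing Implicit Defensive.
Section Alg.
Variables (R : realType) (K L : nat) (alpha : R -> R) (p0 : {ffun 'I_L -> 'I_K} -> R).
Local Notation X := {ffun 'I_L -> 'I_K}.
Local Notation B := {ffun 'I_L -> bool}.
Hypothesis K0 : (0 < K)%N.
Hypothesis a0 : alpha 0 = 1.
Hypothesis p0ge0 : forall y, 0 <= p0 y.

Definition pat (t : R) (tau : 'I_L -> R) : B := [ffun l => t < tau l].
Definition Qp (xt x0 : X) (b : B) : R :=
  \prod_(l < L) (if b l then (xt l == x0 l)%:R else K%:R^-1).
Definition Wt (t : R) (b : B) : R :=
  \prod_(l < L) (if b l then alpha t else 1 - alpha t).
Definition Zp (xt : X) (b : B) : R := \sum_(x0 : X) p0 x0 * Qp xt x0 b.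

Lemma q_tau_pat t xt x0 tau : q_tau t xt x0 tau = Qp xt x0 (pat t tau).
Proof. by apply: eq_bigr => l _; rewrite ffunE. Qed.

Lemma Qp_ge0 a b c : 0 <= Qp a b c.
Proof.
apply: prodr_ge0 => l _; case: (c l) => //; by rewrite invr_ge0 ler0n.
Qed.

Lemma Zp_ge0 a c : 0 <= Zp a c.
Proof. by apply: sumr_ge0 => y _; rewrite mulr_ge0 ?Qp_ge0. Qed.

Lemma Wt_ge0 t c : 0 <= alpha t <= 1 -> 0 <= Wt t c.
Proof.
move=> /andP[h1 h2]; apply: prodr_ge0 => l _; case: (c l) => //; by rewrite subr_ge0.
Qed.

Lemma sumWQ t a b : \sum_(c : B) Wt t c * Qp a b c = q_fwd alpha t 0 a b.
Proof.
rewrite /q_fwd /alpha_ts a0 divr1.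
transitivity (\prod_(l < L) \sum_(c : bool)
   (if c then alpha t * (a l == b l)%:R else (1 - alpha t) / K%:R)); last first.
  by apply: eq_bigr => l _; rewrite big_bool.
rewrite bigA_distr_bigA; apply: eq_bigr => c _; rewrite -big_split /=.
by apply: eq_bigr => l _; case: (c l).
Qed.

Lemma mul_div_cancel (z a : R) : 0 <= a -> a <= z -> z * (a / z) = a.
Proof.
move=> a0' az; have [z0|z0] := eqVneq z 0.
  by move: az; rewrite z0 mul0r => az; apply/eqP; rewrite eq_le a0' az.
by rewrite mulrC divfK.
Qed.

End Alg.
Section Alg1b.
Variables (R : realType) (K L : nat) (alpha : R -> R) (p0 : {ffun 'I_L -> 'I_K} -> R).
Local Notation X := {ffun 'I_L -> 'I_K}.
Local Notation B := {ffun 'I_L -> bool}.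
Local Notation Qp := (@Qp R K L).
Local Notation Zp := (@Zp R K L p0).
Local Notation Wt := (@Wt R L alpha).
Hypothesis K0 : (0 < K)%N.
Hypothesis a0 : alpha 0 = 1.
Hypothesis p0ge0 : forall y, 0 <= p0 y.
Hypothesis p0sum : \sum_y p0 y = 1.

Lemma qf_pos s (a b : X) : 0 <= alpha s < 1 -> 0 < q_fwd alpha s 0 a b.
Proof.
move=> /andP[h1 h2]; rewrite /q_fwd /alpha_ts a0 divr1.
apply: prodr_gt0 => l _; apply: (@lt_le_trans _ _ ((1 - alpha s) / K%:R)).
  by rewrite divr_gt0 ?subr_gt0 // ltr0n.
by rewrite lerDr mulr_ge0.
Qed.

Lemma qf00 (a b : X) : q_fwd alpha 0 0 a b = (a == b)%:R.
Proof.
rewrite /q_fwd /alpha_ts a0 divr1 subrr mul0r.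
under eq_bigr do rewrite mul1r addr0.
have [->|ab] := eqVneq a b; first by rewrite big1 // => l _; rewrite eqxx.
have [l hl] : exists l, a l != b l.
  apply/existsP; move: ab; apply: contraNT; rewrite negb_exists => /forallP h.
  by apply/eqP/ffunP => l; apply/eqP; move: (h l); rewrite negbK.
by rewrite (bigD1 l) //= (negbTE hl) mul0r.
Qed.

Lemma pmarg_pos s (a : X) : 0 <= alpha s < 1 -> 0 < p_marg alpha p0 s a.
Proof.
move=> hs; have [y hy] : exists y, 0 < p0 y.
  apply/existsP; apply: contraT; rewrite negb_exists => /forallP h.
  have : \sum_y p0 y = 0 by apply: big1 => y _; apply/eqP; rewrite eq_le p0ge0 andbT leNgt (h y).
  by rewrite p0sum => /eqP; rewrite oner_eq0.
rewrite /p_marg (bigD1 y) //=; apply: (@lt_le_trans _ _ (p0 y * q_fwd alpha s 0 a y)).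
  by rewrite mulr_gt0 // qf_pos.
rewrite lerDl sumr_ge0 // => z _; rewrite mulr_ge0 //.
move: hs => /andP[h1 h2]; rewrite ltW // qf_pos //; apply/andP; split => //.
Qed.

Lemma bridge_eq s tt (xs y xt : X) : 0 <= alpha tt < 1 ->
  q_fwd alpha tt 0 xt y * q_bridge alpha s tt xs y xt
  = q_fwd alpha tt s xt xs * q_fwd alpha s 0 xs y.
Proof.
move=> htt; rewrite /q_bridge; have [s0|s0] := eqVneq s 0.
  rewrite s0 qf00; have [->|] := eqVneq xs y; first by rewrite !mulr1.
  by rewrite !mulr0.
by rewrite mulrC divfK // gt_eqF // qf_pos.
Qed.

Lemma cancel_sum (W Q P : B -> R) :
  (forall c, 0 <= W c * Q c) ->
  (\sum_c W c * Q c) * \sum_c (Q c / (\sum_c W c * Q c) * P c) * W c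
  = \sum_c W c * Q c * P c.
Proof.
move=> h; set z := \sum_c W c * Q c.
have [z0|z0] := eqVneq z 0.
  rewrite z0 mul0r; symmetry; apply: big1 => c _.
  by rewrite (psumr_eq0P (fun c _ => h c) z0) // mul0r.
rewrite big_distrr; apply: eq_bigr => c _ /=; field; exact: z0.
Qed.

Lemma sumWZ s (a : X) (G : B -> R) :
  \sum_b Wt s b * Zp a b * G b = \sum_y p0 y * \sum_b Wt s b * Qp a y b * G b.
Proof.
transitivity (\sum_b \sum_y p0 y * (Wt s b * Qp a y b * G b)).
  apply: eq_bigr => b _; rewrite /Zp big_distrr big_distrl /=.
  by apply: eq_bigr => y _; ring.
by rewrite exchange_big; apply: eq_bigr => y _; rewrite big_distrr.
Qed.

Lemma sumWQ' s (a y : X) : \sum_b Wt s b * (p0 y * Qp a y b) = p0 y * q_fwd alpha s 0 a y.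
Proof.
rewrite -sumWQ // big_distrr; apply: eq_bigr => b _ /=; ring.
Qed.

Lemma term_le_Zp (a y : X) b : p0 y * Qp a y b <= Zp a b.
Proof.
rewrite /Zp (bigD1 y) //= lerDl sumr_ge0 // => z _.
by rewrite mulr_ge0 ?Qp_ge0.
Qed.

End Alg1b.
Section Alg2.
Variables (R : realType) (K L : nat) (alpha : R -> R) (p0 : {ffun 'I_L -> 'I_K} -> R).
Variables (n : nat) (t : nat -> R) (x : nat -> {ffun 'I_L -> 'I_K}).
Local Notation X := {ffun 'I_L -> 'I_K}.
Local Notation B := {ffun 'I_L -> bool}.
Local Notation Qp := (@Qp R K L).
Local Notation Zp := (@Zp R K L p0).
Local Notation Wt := (@Wt R L alpha).
Local Notation pat := (@pat R L).
Hypothesis K0 : (0 < K)%N.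
Hypothesis a0 : alpha 0 = 1.
Hypothesis p0ge0 : forall y, 0 <= p0 y.
Hypothesis p0sum : \sum_y p0 y = 1.
Hypothesis arange : forall u, 0 <= u <= 1 -> 0 <= alpha u <= 1.
Hypothesis apos : forall u, 0 < u <= 1 -> alpha u < 1.
Hypothesis tgrid : forall k, (k <= n)%N -> 0 <= t k <= 1.
Hypothesis tpos : forall k, (0 < k)%N -> (k <= n)%N -> 0 < t k.
Hypothesis intA : forall s, 0 <= s <= 1 -> forall Phi : B -> R,
  int_tau (fun tau => (j_dens alpha tau * Phi (pat s tau))%:E) = (\sum_b Phi b * Wt s b)%:E.

Fixpoint PR (k : nat) (b : B) : R :=
  match k with
  | 0 => 1
  | k'.+1 => \sum_(y : X) (p0 y * Qp (x k'.+1) y b / Zp (x k'.+1) b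
        * q_bridge alpha (t k') (t k'.+1) (x k') y (x k'.+1))
        * \sum_(c : B) (Qp (x k') y c / q_fwd alpha (t k') 0 (x k') y * PR k' c) * Wt (t k') c
  end.

Lemma sum_q_tau s xt tau : \sum_y p0 y * q_tau s xt y tau = Zp xt (pat s tau).
Proof. by apply: eq_bigr => y _; rewrite q_tau_pat. Qed.

Lemma proc_rest_PR k : (k <= n)%N -> forall tau,
  proc_rest alpha p0 t x k tau = (PR k (pat (t k) tau))%:E.
Proof.
elim: k => [//|k IH] hk tau /=.
rewrite -sumEFin; apply: eq_bigr => y _.
pose Phi := (fun c => Qp (x k) y c / q_fwd alpha (t k) 0 (x k) y * PR k c).
have -> : (fun tau' => ((j_resample alpha (t k) y (x k) tau')%:E * proc_rest alpha p0 t x k tau')%E)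
  = (fun tau' => (j_dens alpha tau' * Phi (pat (t k) tau'))%:E).
  apply/funext => tau'; rewrite IH ?(ltnW hk) // /j_resample q_tau_pat -EFinM.
  by congr EFin; rewrite !mulrA.
rewrite (intA _ Phi); last by apply: tgrid; apply: ltnW.
by rewrite /p0_cond q_tau_pat sum_q_tau -EFinM.
Qed.

Lemma claim k : (k <= n)%N ->
  \sum_b Wt (t k) b * Zp (x k) b * PR k b
  = p_marg alpha p0 (t k) (x k) * \prod_(1 <= i < k.+1) p_rev alpha p0 (t i.-1) (t i) (x i.-1) (x i).
Proof.
elim: k => [_|k IH hk].
  rewrite big_geq // mulr1 sumWZ //; apply: eq_bigr => y _.
  by rewrite -sumWQ //; congr (_ * _); apply: eq_bigr => b _; rewrite mulr1.
have hk' : (k <= n)%N by apply: ltnW.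
set s := t k; set tt := t k.+1; set xs := x k; set xt := x k.+1.
have hs := tgrid hk'; have htt := tgrid hk.
have htt0 : 0 <= alpha tt < 1.
  have /andP[-> _] := arange htt; rewrite apos //.
  by rewrite tpos //=; case/andP: htt => _ ->.
set I := fun y => \sum_(c : B) (Qp xs y c / q_fwd alpha s 0 xs y * PR k c) * Wt s c.
transitivity (\sum_y p0 y * q_fwd alpha tt 0 xt y * q_bridge alpha s tt xs y xt * I y).
  rewrite /=.
  transitivity (\sum_b \sum_y Wt tt b * (Zp xt b * (p0 y * Qp xt y b / Zp xt b)) *
                  q_bridge alpha s tt xs y xt * I y).
    apply: eq_bigr => b _; rewrite big_distrr /=; apply: eq_bigr => y _; rewrite /I; ring.
  rewrite exchange_big /=; apply: eq_bigr => y _.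
  under eq_bigr do rewrite mul_div_cancel ?mulr_ge0 ?Qp_ge0 ?term_le_Zp //.
  by rewrite -!big_distrl /= sumWQ'.
transitivity (q_fwd alpha tt s xt xs * \sum_y p0 y * (q_fwd alpha s 0 xs y * I y)).
  rewrite big_distrr; apply: eq_bigr => y _ /=.
  have hb : q_fwd alpha tt 0 xt y * q_bridge alpha s tt xs y xt
     = q_fwd alpha tt s xt xs * q_fwd alpha s 0 xs y by apply: bridge_eq.
  transitivity (p0 y * (q_fwd alpha tt 0 xt y * q_bridge alpha s tt xs y xt) * I y); first ring.
  rewrite hb; ring.
transitivity (q_fwd alpha tt s xt xs * \sum_b Wt s b * Zp xs b * PR k b).
  rewrite sumWZ //; congr (_ * _); apply: eq_bigr => y _; congr (_ * _).
  rewrite /I -sumWQ // cancel_sum // => c; rewrite mulr_ge0 ?Qp_ge0 ?Wt_ge0 //.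
  by apply: arange.
rewrite IH // [in RHS]big_nat_recr //= {3}/p_rev -/s -/tt -/xs -/xt.
have hp : p_marg alpha p0 tt xt != 0 by rewrite gt_eqF // pmarg_pos.
field; exact: hp.
Qed.

Lemma proc_law_eq : (0 < n)%N ->
  proc_law alpha p0 t x n = (rev_law alpha p0 t x n)%:E.
Proof.
move=> n0; have hn := tgrid (leqnn n).
have htt0 : 0 <= alpha (t n) < 1.
  have /andP[-> _] := arange hn; rewrite apos //.
  by rewrite tpos //=; case/andP: hn => _ ->.
have hp : p_marg alpha p0 (t n) (x n) != 0 by rewrite gt_eqF // pmarg_pos.
pose Phi := fun b => Zp (x n) b * PR n b.
rewrite /proc_law.
have -> : (fun tau => ((p_marg alpha p0 (t n) (x n) * j_cond alpha p0 (t n) (x n) tau)%:E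
                        * proc_rest alpha p0 t x n tau)%E)
   = (fun tau => (j_dens alpha tau * Phi (pat (t n) tau))%:E).
  apply/funext => tau; rewrite proc_rest_PR // -EFinM /j_cond sum_q_tau /Phi.
  congr EFin; field; exact: hp.
rewrite (intA hn Phi) /rev_law -claim //; congr EFin.
by apply: eq_bigr => b _; rewrite /Phi; ring.
Qed.

End Alg2.
Section Iter.
Variables (R : realType) (alpha : R -> R) (tm : R).
Local Notation g := (fun u : R => - derive1 alpha u).
Local Notation w := (fun b : bool => if b then alpha tm else 1 - alpha tm).
Hypothesis oneD : forall H : bool -> R,
  (\int[@lebesgue_measure R]_(u in `[0%R, 1%R]) (g u * H (tm < u))%:E
    = (H true * alpha tm + H false * (1 - alpha tm))%:E)%E.

Definition consf m (b0 : bool) (c : {ffun 'I_m -> bool}) : {ffun 'I_m.+1 -> bool} :=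
  [ffun i => if unlift ord0 i is Some j then c j else b0].

Lemma consf0 m b0 (c : {ffun 'I_m -> bool}) : consf b0 c ord0 = b0.
Proof. by rewrite ffunE unlift_none. Qed.

Lemma consfS m b0 (c : {ffun 'I_m -> bool}) j : consf b0 c (lift ord0 j) = c j.
Proof. by rewrite ffunE liftK. Qed.

Lemma sum_consf m (F : {ffun 'I_m.+1 -> bool} -> R) :
  \sum_b F b = \sum_(b0 : bool) \sum_(c : {ffun 'I_m -> bool}) F (consf b0 c).
Proof.
rewrite pair_big /= (reindex (fun p : bool * {ffun 'I_m -> bool} => consf p.1 p.2)) //=.
exists (fun b : {ffun 'I_m.+1 -> bool} => (b ord0, [ffun j => b (lift ord0 j)])).
  move=> [b0 c] _ /=; rewrite consf0; congr pair; apply/ffunP => j.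
  by rewrite ffunE consfS.
move=> b _ /=; apply/ffunP => i; rewrite ffunE.
by case: unliftP => [j ->|->] //; rewrite ffunE.
Qed.

Lemma prod_consf m b0 (c : {ffun 'I_m -> bool}) :
  \prod_(i < m.+1) w (consf b0 c i) = w b0 * \prod_(i < m) w (c i).
Proof. by rewrite big_ord_recl consf0; under eq_bigr do rewrite consfS. Qed.

Lemma iter_gen m (f : seq R -> \bar R) (Phi : {ffun 'I_m -> bool} -> R) :
  (forall s, size s = m -> f s =
     ((\prod_(i < m) g (nth 0 s i)) * Phi [ffun i : 'I_m => tm < nth 0 s i])%:E) ->
  iterint m f = (\sum_(b : {ffun 'I_m -> bool}) Phi b * \prod_(i < m) w (b i))%:E.
Proof.
elim: m f Phi => [|m IH] f Phi hf.
  rewrite /= hf // big_ord0 mul1r; set b1 := [ffun _ => _].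
  congr EFin; rewrite (bigD1 b1) //= big_ord0 mulr1 big1 ?addr0 //.
  move=> c hc; exfalso; move/negP: hc; apply; apply/eqP/ffunP => -[i hi]; exfalso; by rewrite ltn0 in hi.
pose H := fun b0 => \sum_(c : {ffun 'I_m -> bool}) Phi (consf b0 c) * \prod_(i < m) w (c i).
have inner : forall u, iterint m (fun s => f (u :: s)) = (g u * H (tm < u))%:E.
  move=> u; rewrite (IH _ (fun c => g u * Phi (consf (tm < u) c))).
    by rewrite /H big_distrr /=; congr EFin; apply: eq_bigr => c _; rewrite mulrA.
  move=> s hs; rewrite hf /= ?hs //; congr EFin.
  rewrite big_ord_recl /=.
  have -> : [ffun i : 'I_m.+1 => tm < nth 0 (u :: s) i] = consf (tm < u) [ffun i : 'I_m => tm < nth 0 s i].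
    apply/ffunP => i; rewrite !ffunE; case: unliftP => [j ->|->] //=.
    by rewrite ffunE add0n.
  rewrite (eq_bigr (fun i : 'I_m => g (nth 0 s i))); last by move=> i _ /=; rewrite ?add0n.
  ring.
rewrite /=; under eq_integral => u _ do rewrite inner.
rewrite oneD; congr EFin.
rewrite sum_consf big_bool /H !big_distrl /=; congr (_ + _); apply: eq_bigr => c _;
  rewrite prod_consf /=; ring.
Qed.

Lemma intA_gen L (Phi : {ffun 'I_L -> bool} -> R) :
  int_tau (fun tau => (j_dens alpha tau * Phi (@pat R L tm tau))%:E)
  = (\sum_b Phi b * @Wt R L alpha tm b)%:E.
Proof. by apply: iter_gen. Qed.

End Iter.
Section Ana.
Variables (R : realType) (alpha : R -> R).
Hypothesis hc : {within `[0, 1], continuous alpha}.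
Hypothesis hd : forall u, 0 < u < 1 -> derivable alpha u 1.
Hypothesis hdc : {in `]0, 1[, continuous (derive1 alpha)}.
Hypothesis hdec : {in `[0, 1] &, forall a b, a < b -> alpha b < alpha a}.
Hypothesis a0 : alpha 0 = 1.
Hypothesis a1 : alpha 1 = 0.

Local Notation mu := (@lebesgue_measure R).
Local Notation EB := (measurable_realfun.constructive_ereal_extended__canonical__measurable_structure_SigmaRing R).

Lemma g_ge0 u : 0 < u < 1 -> 0 <= - derive1 alpha u.
Proof.
move=> hu; rewrite oppr_ge0; apply: (@decr_derive1_le0_itv R alpha true false 0 1).
- move=> z; rewrite inE /= in_itv /=; exact: hd.
- by move=> a b ha hb ab; apply: hdec.
- by rewrite in_itv.
Qed.

Lemma g_meas : measurable_fun (`]0, 1[ : set R) (fun u : R => - derive1 alpha u).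
Proof.
apply: (@measurable_realfun.open_continuous_measurable_fun R); first exact: interval_open.
move=> z hz; apply: continuousN; by apply: hdc; move: hz; rewrite inE.
Qed.

Lemma in01 (z c d : R) : 0 < c -> d < 1 -> c <= z <= d -> 0 < z < 1.
Proof. by move=> c0 d1 /andP[h1 h2]; apply/andP; split; [exact: lt_le_trans c0 h1 | exact: le_lt_trans h2 d1]. Qed.

Lemma cont_at (z : R) : 0 < z < 1 -> {for z, continuous alpha}.
Proof. by move=> hz; apply: differentiable_continuous; apply/derivable1_diffP; apply: hd. Qed.

Lemma ftc_cc c d : 0 < c -> c < d -> d < 1 ->
  (\int[mu]_(x in `[c, d]) (- derive1 alpha x)%:E = (alpha c - alpha d)%:E)%E.
Proof.
move=> c0 cd d1.
rewrite (@continuous_FTC2 R (fun x => - derive1 alpha x) (- alpha)%R c d cd).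
- by rewrite -EFinB; congr EFin; rewrite /= opprK addrC.
- apply: continuous_in_subspaceT => z; rewrite inE /= in_itv /= => hz.
  apply: cvgN; apply: hdc; rewrite in_itv /=; exact: (in01 c0 d1 hz).
- split.
  + move=> z; rewrite in_itv /= => /andP[h1 h2]; apply: derivableN; apply: hd.
    by apply: (in01 c0 d1); rewrite !ltW.
  + apply: cvg_at_right_filter; apply: cvgN; apply: cont_at; rewrite c0 /=.
    exact: (lt_trans cd d1).
  + apply: cvg_at_left_filter; apply: cvgN; apply: cont_at; rewrite d1 andbT.
    exact: (lt_trans c0 cd).
- move=> z; rewrite in_itv /= => /andP[h1 h2]; rewrite derive1N //; apply: hd.
  by apply: (in01 c0 d1); rewrite !ltW.
Qed.

Lemma ra (a : R) : 0 <= a < 1 -> alpha x @[x --> a^'+] --> alpha a.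
Proof.
case/andP => a0' a1'; have [->|ap] := eqVneq a 0.
  by have [_ h _] := (continuous_within_itvP _ ltr01).1 hc.
by apply: cvg_at_right_filter; apply: cont_at; rewrite a1' andbT lt_neqAle eq_sym ap a0'.
Qed.

Lemma la (b : R) : 0 < b <= 1 -> alpha x @[x --> b^'-] --> alpha b.
Proof.
case/andP => b0' b1'; have [->|bp] := eqVneq b 1.
  by have [_ _ h] := (continuous_within_itvP _ ltr01).1 hc.
by apply: cvg_at_left_filter; apply: cont_at; rewrite b0' /= lt_neqAle bp b1'.
Qed.

Lemma ftc_oo (a b : R) : 0 <= a -> a < b -> b <= 1 ->
  (\int[mu]_(x in `]a, b[) (- derive1 alpha x)%:E = (alpha a - alpha b)%:E)%E.
Proof.
move=> a0' ab b1'.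
set e := (b - a) / 3.
have e0 : 0 < e by rewrite divr_gt0 ?subr_gt0.
pose an := fun n : nat => a + e * n.+1%:R^-1.
pose bn := fun n : nat => b - e * n.+1%:R^-1.
have hinv n : 0 < (n.+1%:R^-1 : R) <= 1.
  by rewrite invr_gt0 ltr0n /= invf_le1 ?ler1n ?ltr0n.
have an_gt n : a < an n by rewrite /an ltrDl mulr_gt0 //; case/andP: (hinv n).
have bn_lt n : bn n < b by rewrite /bn ltrBlDr ltrDl mulr_gt0 //; case/andP: (hinv n).
have anbn n : an n < bn n.
  rewrite /an /bn; have /andP[h1 h2] := hinv n.
  have : e * n.+1%:R^-1 <= e by rewrite ler_piMr // ltW.
  have e3 : b - a = 3 * e by rewrite /e; field.
  move=> h; set y := e * n.+1%:R^-1 in h *; lra.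
have an_nd : forall i j, (i <= j)%N -> an j <= an i.
  by move=> i j nm; rewrite /an lerD2l ler_pM2l // lef_pV2 ?posrE ?ltr0n // ler_nat.
have bn_nd : forall i j, (i <= j)%N -> bn i <= bn j.
  by move=> i j nm; rewrite /bn lerD2l lerN2 ler_pM2l // lef_pV2 ?posrE ?ltr0n // ler_nat.
pose gs : nat -> R -> \bar R := fun n x => ((- derive1 alpha x) * \1_(`[an n, bn n] : set R) x)%:E.
have mD : measurable (`]a, b[ : set R) by [].
have gD x : x \in `]a, b[ -> 0 <= - derive1 alpha x.
  rewrite in_itv /= => /andP[h1 h2]; apply: g_ge0; apply/andP; split.
    exact: le_lt_trans a0' h1.
  exact: lt_le_trans h2 b1'.
have mgs n : measurable_fun (U := EB) (`]a, b[ : set R) (gs n).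
  apply/measurable_EFinP; apply: measurable_funM; last exact: measurable_indic.
  apply: measurable_funS g_meas => //; apply: subset_itv; rewrite bnd_simp //.
have gs0 (n : nat) (x : R) : `]a, b[%classic x -> (0 <= gs n x)%E.
  move=> hx; rewrite lee_fin mulr_ge0 // ?indicE ?ler0n //; apply: gD; exact: hx.
have ndgs (x : R) : `]a, b[%classic x -> {homo gs^~ x : n m / (n <= m)%N >-> (n <= m)%E}.
  move=> hx n m nm; rewrite /gs lee_fin !indicE.
  have hg : 0 <= - derive1 alpha x by apply: gD; exact: hx.
  case: (boolP (x \in (`[an n, bn n]%classic : set R))) => hn /=.
    have -> : x \in (`[an m, bn m]%classic : set R).
      move: hn; rewrite !inE /= !in_itv /= => /andP[h1 h2].
      by rewrite (le_trans (an_nd _ _ nm) h1) (le_trans h2 (bn_nd _ _ nm)).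
    by [].
  by rewrite mulr0 mulr_ge0 // ler0n.
have Aint n : (\int[mu]_(x in `]a, b[) gs n x = (alpha (an n) - alpha (bn n))%:E)%E.
  have sub : (`[an n, bn n]%classic : set R) `<=` `]a, b[%classic.
    by apply: subset_itv; rewrite bnd_simp ?an_gt ?bn_lt.
  transitivity (\int[mu]_(x in `]a, b[%classic `&` `[an n, bn n]%classic) (- derive1 alpha x)%:E)%E.
    rewrite integral_mkcondr; apply: eq_integral => x _.
    rewrite /gs patchE indicE; case: (x \in _) => /=; by rewrite ?mulr1 ?mulr0.
  rewrite setIidr //; apply: ftc_cc.
  - exact: le_lt_trans a0' (an_gt n).
  - exact: anbn.
  - exact: lt_le_trans (bn_lt n) b1'.
have := monotone_convergence mu mD mgs gs0 ndgs.
have -> : (\int[mu]_(x in `]a, b[) (fun x0 => limn (gs^~ x0)) x)%E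
          = (\int[mu]_(x in `]a, b[) (- derive1 alpha x)%:E)%E.
  apply: eq_integral => x; rewrite inE /= in_itv /= => /andP[xa xb].
  apply: lim_near_cst => //.
  set del := Num.min (x - a) (b - x).
  have del0 : 0 < del by rewrite lt_min !subr_gt0 xa xb.
  near=> k.
  have hk : e / del < k%:R by near: k; exact: nbhs_infty_gtr.
  have hk' : e * k.+1%:R^-1 < del.
    rewrite ltr_pdivrMr ?ltr0n //.
    have hk2 : e < k%:R * del by rewrite -ltr_pdivrMr.
    apply: (lt_le_trans hk2); rewrite mulrC ler_pM2l // ler_nat //.
  have : del <= x - a by rewrite ge_min lexx.
  have : del <= b - x by rewrite ge_min lexx orbT.
  move=> h1 h2.
  rewrite /gs indicE.
  have -> : x \in (`[an k, bn k]%classic : set R).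
    rewrite inE /= in_itv /= /an /bn; set y := e * k.+1%:R^-1 in hk' *.
    apply/andP; split; lra.
  by rewrite mulr1.
move=> ->.
have -> : (fun n => \int[mu]_(x in `]a, b[) gs n x)%E
   = EFin \o (fun n => alpha (an n) - alpha (bn n)).
  by apply/funext => n; rewrite Aint.
have han : an @ \oo --> a.
  rewrite -[X in _ --> X]addr0; apply: cvgD; first exact: cvg_cst.
  rewrite -(mulr0 e); apply: cvgMl_tmp; exact: cvg_harmonic.
have hbn : bn @ \oo --> b.
  rewrite -[X in _ --> X]subr0; apply: cvgB; first exact: cvg_cst.
  rewrite -(mulr0 e); apply: cvgMl_tmp; exact: cvg_harmonic.
have ha : alpha (an n) @[n --> \oo] --> alpha a.
  apply: (cvg_at_rightP alpha a (alpha a)).1; first by apply: ra; rewrite a0' (lt_le_trans ab b1').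
  by split.
have hb : alpha (bn n) @[n --> \oo] --> alpha b.
  apply: (cvg_at_leftP alpha b (alpha b)).1; first by apply: la; rewrite b1' andbT (le_lt_trans a0' ab).
  by split.
have hab : (fun n => alpha (an n) - alpha (bn n)) @ \oo --> alpha a - alpha b.
  exact: cvgB ha hb.
rewrite EFin_lim; last exact: cvgP hab.
by rewrite (cvg_lim _ hab).
Unshelve. all: by end_near.
Qed.

Lemma gmeas_itv (a b : R) b0 b1 : 0 <= a -> b <= 1 ->
  measurable_fun [set` Interval (BSide b0 a) (BSide b1 b)] (fun u : R => - derive1 alpha u).
Proof.
move=> a0' b1'.
apply: (@measurable_funS _ _ _ _ `[a, b]%classic) => //.
  by apply: subset_itv; case: b0; case: b1; rewrite bnd_simp.
apply: (@measurable_fun_itv_cc _ _ _ false true).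
apply: measurable_funS g_meas => //.
by apply: subset_itv; rewrite bnd_simp.
Qed.

Lemma piece (a b : R) b0 b1 (c : R) : 0 <= a -> a <= b -> b <= 1 ->
  (\int[mu]_(x in [set` Interval (BSide b0 a) (BSide b1 b)]) (- derive1 alpha x * c)%:E
    = (c * (alpha a - alpha b))%:E)%E.
Proof.
move=> a0' ab b1'.
have mg : measurable_fun (`]a, b[%classic : set R) (fun u : R => - derive1 alpha u).
  exact: (@gmeas_itv a b false true).
rewrite integral_itv_bndoo; last first.
  by apply/measurable_EFinP; apply: measurable_funM => //; exact: measurable_cst.
have [<-|altb] := eqVneq a b.
  rewrite set_itv_ge ?integral_set0 ?subrr ?mulr0 //.
  by rewrite bnd_simp ltxx.
have ab' : a < b by rewrite lt_neqAle altb ab.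
under eq_integral do rewrite EFinM.
rewrite integralZr //; last first.
  apply/integrableP; split; first exact/measurable_EFinP.
  rewrite [X in (X < _)%E](_ : _ = \int[mu]_(x in `]a, b[) (- derive1 alpha x)%:E)%E; last first.
    apply: eq_integral => x; rewrite inE /= in_itv /= => /andP[h1 h2].
    rewrite ger0_norm // g_ge0 //; apply/andP; split.
      exact: le_lt_trans a0' h1.
    exact: lt_le_trans h2 b1'.
  by rewrite ftc_oo // ltry.
by rewrite ftc_oo // -EFinM mulrC.
Qed.

Lemma oneD (tm : R) : 0 <= tm <= 1 -> forall H : bool -> R,
  (\int[@lebesgue_measure R]_(u in `[0%R, 1%R]) (- derive1 alpha u * H (tm < u))%:E
    = (H true * alpha tm + H false * (1 - alpha tm))%:E)%E.
Proof.
case/andP => t0 t1 H.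
rewrite (@itv_bndbnd_setU _ _ (BLeft 0) (BRight tm) (BRight 1)); rewrite ?bnd_simp //.
rewrite integral_setU //; last 2 first.
- rewrite -itv_bndbnd_setU ?bnd_simp //.
  apply/measurable_EFinP; apply: measurable_funM; first exact: (@gmeas_itv 0 1 true false).
  apply: (@eq_measurable_fun _ _ _ _ _
            (fun u => H false + (H true - H false) * \1_(`]tm, +oo[%classic : set R) u)).
    move=> u _; rewrite indicE.
    rewrite (_ : (u \in _) = (tm < u)); last first.
      apply/idP/idP; first by move/set_mem; rewrite /= in_itv /= andbT.
      by move=> h; apply: mem_set; rewrite /= in_itv /= andbT.
    by case: (tm < u); rewrite /= ?mulr1 ?mulr0 ?addr0 //; ring.
  apply: measurable_funD; first exact: measurable_cst.
  apply: measurable_funM; first exact: measurable_cst.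
  exact: measurable_indic.
- rewrite disj_set2E; apply/eqP/seteqP; split => // u /= [].
  rewrite !in_itv /= => /andP[_ h1] /andP[h2 _]; lra.
rewrite [X in (X + _)%E](_ : _ = (\int[mu]_(x in [set` Interval (BLeft 0%R) (BRight tm)]) (- derive1 alpha x * H false)%:E)%E); last first.
  by apply: eq_integral => u; rewrite inE /= in_itv /= => /andP[_ h]; rewrite ltNge h.
rewrite [X in (_ + X)%E](_ : _ = (\int[mu]_(x in [set` Interval (BRight tm) (BRight 1%R)]) (- derive1 alpha x * H true)%:E)%E); last first.
  by apply: eq_integral => u; rewrite inE /= in_itv /= => /andP[h _]; rewrite h.
rewrite piece // piece // -EFinD; congr EFin; rewrite a0 a1; ring.
Qed.

End Ana.
Theorem mainTheorem10 (R : realType) (K L : nat) (alpha : R -> R)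
    (p0 : {ffun 'I_L -> 'I_K} -> R) (n : nat) (t : nat -> R)
    (x : nat -> {ffun 'I_L -> 'I_K}) :
  (2 <= K)%N -> (1 <= L)%N ->
  (* schedule: continuously differentiable, strictly decreasing, alpha 0 = 1, alpha 1 = 0 *)
  {within `[0, 1], continuous alpha} ->
  (forall u, 0 < u < 1 -> derivable alpha u 1) ->
  {in `]0, 1[, continuous (derive1 alpha)} ->
  {in `[0, 1] &, forall a b, a < b -> alpha b < alpha a} ->
  alpha 0 = 1 -> alpha 1 = 0 ->
  (* p0 is a probability distribution on X *)
  (forall y, 0 <= p0 y) -> \sum_(y : {ffun 'I_L -> 'I_K}) p0 y = 1 ->
  (* grid 0 = t_0 < t_1 < ... < t_n = 1 *)
  t 0%N = 0 -> t n = 1 -> (forall k, (k < n)%N -> t k < t k.+1) ->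
  proc_law alpha p0 t x n = (rev_law alpha p0 t x n)%:E.
Proof.
move=> hK hL hc hd hdc hdec a0 a1 p0ge0 p0sum t0 tn tinc.
have K0 : (0 < K)%N by apply: leq_trans hK.
have n0 : (0 < n)%N.
  case: n tn tinc => // tn _; move: tn; rewrite t0 => /eqP; rewrite eq_sym oner_eq0.
  by [].
have tmono : forall i j, (i <= j)%N -> (j <= n)%N -> t i <= t j.
  move=> i j ij; elim: j ij => [|j IH] ij jn.
    by move: ij; rewrite leqn0 => /eqP ->.
  move: ij; rewrite leq_eqVlt => /orP[/eqP -> //|ij].
  apply: (le_trans (IH ij (ltnW jn))); exact: ltW (tinc _ jn).
have tgrid : forall k, (k <= n)%N -> 0 <= t k <= 1.
  move=> k kn; rewrite -t0 -tn; apply/andP; split; apply: tmono => //.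
have tpos : forall k, (0 < k)%N -> (k <= n)%N -> 0 < t k.
  move=> k k0 kn; rewrite -t0; apply: (lt_le_trans (tinc 0%N (leq_trans k0 kn))).
  exact: tmono.
have arange : forall u, 0 <= u <= 1 -> 0 <= alpha u <= 1.
  move=> u /andP[u0 u1]; apply/andP; split.
    rewrite -a1; have [->|uv] := eqVneq u 1; first by [].
    apply: ltW; apply: hdec; rewrite ?in_itv /= ?u0 ?u1 ?ler01 ?lexx //.
    by rewrite lt_neqAle uv u1.
  rewrite -a0; have [->|uv] := eqVneq u 0; first by [].
  apply: ltW; apply: hdec; rewrite ?in_itv /= ?u0 ?u1 ?ler01 ?lexx //.
  by rewrite lt_neqAle eq_sym uv u0.
have apos : forall u, 0 < u <= 1 -> alpha u < 1.
  move=> u /andP[u0 u1]; rewrite -a0; apply: hdec; rewrite ?in_itv /= ?u1 ?ler01 ?lexx ?ltW //.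
have intA : forall s, 0 <= s <= 1 -> forall Phi : {ffun 'I_L -> bool} -> R,
    int_tau (fun tau => (j_dens alpha tau * Phi (pat s tau))%:E) = (\sum_b Phi b * Wt alpha s b)%:E.
  move=> s hs Phi; apply: intA_gen.
  exact: (oneD hc hd hdc hdec a0 a1 hs).
exact: (proc_law_eq x K0 a0 p0ge0 p0sum arange apos tgrid tpos intA n0).
Qed.
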